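(* Let $\alpha>-1$, $\alpha\ne0$, let $\eta_1=\eta_1(\alpha)\in(0,1)$ be the root of $\eta^\alpha=\dfrac{1}{1+\alpha(\eta+1)}$, and let $$\psi_0(\alpha,\eta)=\dfrac{(1+\eta^{\alpha+1})^{1/\alpha}}{(1+\eta)^{(\alpha+1)/\alpha}}+\dfrac{(\alpha+1)^{(\alpha+1)/\alpha}}{\alpha}\left[\dfrac1{1+\eta^{\alpha+1}}-\dfrac1{1+\eta}\right].$$ Then the function $\eta\mapsto\psi_0(\alpha,\eta)$ attains its maximal value on $[0,\eta_1]$ at an interior point $\eta_{\max}=\eta_{\max}(\alpha)\in(0,\eta_1)$, at which $\dfrac{\partial}{\partial\eta}\psi_0(\alpha,\eta_{\max})=0$. *)

(* Defs.v *)
From Stdlib Require Import Reals.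
Open Scope R_scope.

(* Real power x^y for x >= 0: Rpower for x > 0, and 0 for x <= 0
   (so that 0^y = 0 for y > 0, as used at eta = 0). *)
Definition rpow (x y : R) : R := if Rlt_dec 0 x then Rpower x y else 0.

Definition psi0 (a eta : R) : R :=
  rpow (1 + rpow eta (a + 1)) (1 / a) / rpow (1 + eta) ((a + 1) / a)
  + rpow (a + 1) ((a + 1) / a) / a
    * (1 / (1 + rpow eta (a + 1)) - 1 / (1 + eta)).

Definition eta1_root (a eta : R) : Prop :=
  0 < eta < 1 /\ rpow eta a = 1 / (1 + a * (eta + 1)).

(* Main.v *)
Require Import Defs.
From Stdlib Require Import Reals Lra.
From Coquelicot Require Import Coquelicot.
Open Scope R_scope.

Lemma exp_le' x y : x <= y -> exp x <= exp y.
Proof. intros [H|H]. left; now apply exp_increasing. subst; lra. Qed.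
Lemma ln_le' x y : 0 < x -> x <= y -> ln x <= ln y.
Proof. intros H [H1|H1]. left; now apply ln_increasing. subst; lra. Qed.
Lemma ln_pos' x : 1 < x -> 0 < ln x.
Proof. intros H. rewrite <- ln_1. apply ln_increasing; lra. Qed.
Lemma ln_neg' x : 0 < x -> x < 1 -> ln x < 0.
Proof. intros H H1. rewrite <- ln_1. apply ln_increasing; lra. Qed.
Lemma exp_gt1' x : 0 < x -> 1 < exp x.
Proof. intros H. rewrite <- exp_0. now apply exp_increasing. Qed.
Lemma exp_lt1' x : x < 0 -> exp x < 1.
Proof. intros H. rewrite <- exp_0. now apply exp_increasing. Qed.

Lemma rpow_pos_eq x y : 0 < x -> rpow x y = exp (y * ln x).
Proof. intros H. unfold rpow. destruct (Rlt_dec 0 x); [reflexivity|lra]. Qed.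

Lemma exp_a1 a x : 0 < x -> exp ((a+1) * ln x) = x * exp (a * ln x).
Proof. intros H. replace ((a+1)*ln x) with (ln x + a * ln x) by ring.
rewrite exp_plus, exp_ln; auto. Qed.

Definition cc a := rpow (a+1) ((a+1)/a).
Definition Kc a := cc a / a.
Definition F a x := exp (1/a * ln (1 + exp ((a+1)*ln x))) * exp (- ((a+1)/a) * ln (1+x))
   + Kc a * (1/(1 + exp ((a+1)*ln x)) - 1/(1+x)).
Definition UU a x := exp (a * ln x).
Definition AA a x := exp (1/a * ln (1 + x * UU a x)) * exp (- ((a+1)/a) * ln (1+x)).
Definition Dpsi a x :=
  (a+1)/a * AA a x * (UU a x/(1+x*UU a x) - 1/(1+x))
  + Kc a * (1/(1+x)^2 - (a+1)*UU a x/(1+x*UU a x)^2).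

Lemma psi0_F a x : 0 < x -> psi0 a x = F a x.
Proof.
intros H. unfold psi0, F, Kc, cc.
assert (Ht : 0 < exp ((a+1)*ln x)) by apply exp_pos.
rewrite (rpow_pos_eq x) by lra.
rewrite (rpow_pos_eq (1 + _)) by lra.
rewrite (rpow_pos_eq (1 + x)) by lra.
unfold Rdiv at 1. rewrite <- exp_Ropp.
unfold Rdiv. rewrite <- Ropp_mult_distr_l. reflexivity.
Qed.

Lemma derF a x : a <> 0 -> 0 < x -> is_derive (F a) x (Dpsi a x).
Proof.
intros Ha H. unfold F. auto_derive.
- assert (0 < exp ((a+1)*ln x)) by apply exp_pos. repeat split; lra.
- unfold Dpsi, AA, UU. rewrite (exp_a1 a x H).
  assert (0 < exp (a * ln x)) by apply exp_pos.
  set (u := exp (a * ln x)) in *.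
  set (B1 := exp (1 / a * ln (1 + x * u))).
  set (B2 := exp (- ((a + 1) / a) * ln (1 + x))).
  field. repeat split; try lra; nra.
Qed.

Lemma der_psi0 a x : a <> 0 -> 0 < x -> derivable_pt_lim (psi0 a) x (Dpsi a x).
Proof.
intros Ha H. apply is_derive_Reals.
apply (is_derive_ext_loc (F a)); [|now apply derF].
exists (mkposreal x H). intros y Hy.
unfold ball in Hy; simpl in Hy. unfold AbsRing_ball, abs, minus, plus, opp in Hy; simpl in Hy.
apply Rabs_lt_between' in Hy.
symmetry; apply psi0_F; lra.
Qed.
Lemma cc_pos a : -1 < a -> 0 < cc a.
Proof. intros. unfold cc. rewrite rpow_pos_eq by lra. apply exp_pos. Qed.
Lemma AA_pos a x : 0 < AA a x.
Proof. unfold AA. apply Rmult_lt_0_compat; apply exp_pos. Qed.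
Lemma UU_pos a x : 0 < UU a x.
Proof. apply exp_pos. Qed.

Lemma D_eta1 a e : -1 < a -> a <> 0 -> eta1_root a e -> Dpsi a e < 0.
Proof.
intros Ha Ha0 [[He0 He1] Hr].
rewrite rpow_pos_eq in Hr by lra. fold (UU a e) in Hr.
assert (Hu := UU_pos a e).
assert (HD : 1 + a*(e+1) <> 0).
{ intros HD. rewrite HD in Hr. unfold Rdiv in Hr. rewrite Rinv_0 in Hr. lra. }
assert (HDu : (1 + a*(e+1)) * UU a e = 1). { rewrite Hr. field. auto. }
assert (HDp : 0 < 1 + a*(e+1)) by nra.
assert (HA := AA_pos a e). assert (Hc := cc_pos a Ha).
assert (E : Dpsi a e = - AA a e/(1+e) - cc a * e/((1+a)*(1+e)^2)).
{ unfold Dpsi, Kc. rewrite Hr. field. repeat split; try lra.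
}
rewrite E.
assert (0 < AA a e / (1+e)) by (apply Rdiv_lt_0_compat; lra).
assert (0 < cc a * e / ((1+a)*(1+e)^2)) by (apply Rdiv_lt_0_compat; [nra| apply Rmult_lt_0_compat; [lra| apply pow_lt; lra]]).
lra.
Qed.
Lemma AA_bound_pos a x : 0 < a -> 0 < x < 1 -> AA a x * (1 + x) <= 1.
Proof.
intros Ha [Hx0 Hx1]. unfold AA.
assert (Hu : UU a x <= 1).
{ unfold UU. left. apply exp_lt1'. assert (ln x < 0) by (apply ln_neg'; lra). nra. }
assert (Hu0 := UU_pos a x).
assert (H1 : exp (1 / a * ln (1 + x * UU a x)) <= exp (1/a * ln (1+x))).
{ apply exp_le'. apply Rmult_le_compat_l. unfold Rdiv; rewrite Rmult_1_l; left; apply Rinv_0_lt_compat; lra.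
  apply ln_le'; nra. }
assert (H2 : exp (1/a * ln (1+x)) * exp (- ((a + 1) / a) * ln (1 + x)) * (1+x) = 1).
{ rewrite <- exp_plus. replace (1 / a * ln (1 + x) + - ((a + 1) / a) * ln (1 + x)) with (- ln (1+x)) by (field; auto with real; lra).
  rewrite exp_Ropp, exp_ln by lra. field. lra. }
assert (0 < exp (- ((a + 1) / a) * ln (1 + x))) by apply exp_pos.
apply Rle_trans with (exp (1/a * ln (1+x)) * exp (- ((a + 1) / a) * ln (1 + x)) * (1+x)); [|lra].
apply Rmult_le_compat_r; [lra|]. apply Rmult_le_compat_r; lra.
Qed.

Lemma near0_pos a e1 : 0 < a -> 0 < e1 < 1 ->
  exists e0, 0 < e0 <= e1 /\ forall x, 0 < x <= e0 -> 0 < Dpsi a x.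
Proof.
intros Ha [He0 He1].
assert (Hc : a + 1 < cc a).
{ unfold cc. rewrite rpow_pos_eq by lra. rewrite <- (exp_ln (a+1)) at 1 by lra.
  apply exp_increasing. assert (0 < ln (a+1)) by (apply ln_pos'; lra).
  replace ((a + 1) / a * ln (a + 1)) with (ln (a+1) + ln (a+1) / a) by (field; lra).
  assert (0 < ln (a+1) / a) by (apply Rdiv_lt_0_compat; lra). lra. }
set (c := cc a) in *.
set (K0 := (c - (a+1)) / (8 * c * (a+1))).
assert (HK0 : 0 < K0) by (apply Rdiv_lt_0_compat; [lra| apply Rmult_lt_0_compat; lra]).
exists (Rmin e1 (exp (ln K0 / a))).
assert (0 < exp (ln K0 / a)) by apply exp_pos.
split. { split. apply Rmin_glb_lt; lra. apply Rmin_l. }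
intros x [Hx0 Hx1].
assert (Hxe1 : x <= e1) by (eapply Rle_trans; [exact Hx1| apply Rmin_l]).
assert (Hxe2 : x <= exp (ln K0 / a)) by (eapply Rle_trans; [exact Hx1| apply Rmin_r]).
assert (HuK : UU a x <= K0).
{ unfold UU. rewrite <- (exp_ln K0) by lra. apply exp_le'.
  assert (ln x <= ln K0 / a) by (rewrite <- (ln_exp (ln K0 / a)); apply ln_le'; lra).
  replace (ln K0) with (a * (ln K0 / a)) by (field; lra). nra. }
assert (HA := AA_bound_pos a x Ha ltac:(lra)).
assert (HA0 := AA_pos a x). assert (Hu0 := UU_pos a x).
set (u := UU a x) in *. set (A := AA a x) in *.
assert (E : Dpsi a x = ((a+1)*A*(u/(1+x*u) - 1/(1+x)) + c*(1/(1+x)^2 - (a+1)*u/(1+x*u)^2)) / a).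
{ unfold Dpsi, Kc. fold u A c. field. repeat split; try lra; nra. }
rewrite E. apply Rdiv_lt_0_compat; [|lra].
set (w := 1/(1+x)^2).
assert (Hw : w * (1+x)^2 = 1) by (unfold w; field; lra).
assert (Hw4 : 1/4 <= w).
{ unfold w. apply Rmult_le_reg_r with (4 * (1+x)^2). nra. field_simplify; nra. }
assert (T1a : 0 <= A * (u / (1 + x*u))) by (apply Rmult_le_pos; [lra| apply Rdiv_le_0_compat; nra]).
assert (T1b : A / (1+x) <= w).
{ replace (A / (1+x)) with (A * (1+x) * w) by (unfold w; field; lra). nra. }
assert (T2 : u / (1+x*u)^2 <= u).
{ apply Rmult_le_reg_r with ((1+x*u)^2). nra. field_simplify; try nra.
  assert (0 <= u^3*x^2) by (apply Rmult_le_pos; apply pow_le; lra).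
  assert (0 <= u^2*x) by (apply Rmult_le_pos; [apply pow_le|]; lra). lra. }
assert (E2 : (a + 1) * A * (u / (1 + x * u) - 1 / (1 + x)) + c * (w - (a + 1) * u / (1 + x * u) ^ 2)
  = (a+1) * (A * (u / (1 + x*u))) - (a+1) * (A / (1+x)) + c * w - c * (a+1) * (u / (1+x*u)^2)).
{ unfold Rdiv. ring. }
rewrite E2.
assert (c * (a+1) * (u / (1+x*u)^2) <= c * (a+1) * K0).
{ apply Rmult_le_compat_l. nra. lra. }
assert (c * (a+1) * K0 = (c - (a+1)) / 8) by (unfold K0; field; lra).
nra.
Qed.
Lemma near0_neg a e1 : -1 < a < 0 -> 0 < e1 < 1 ->
  exists e0, 0 < e0 <= e1 /\ forall x, 0 < x <= e0 -> 0 < Dpsi a x.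
Proof.
intros [Ha1 Ha] [He0 He1].
assert (Hia : / a < 0) by (apply Rinv_lt_0_compat; lra).
assert (Hq : (a+1)/a < 0) by (unfold Rdiv; nra).
assert (Hc : 1 < cc a).
{ unfold cc. rewrite rpow_pos_eq by lra. apply exp_gt1'.
  assert (ln (a+1) < 0) by (apply ln_neg'; lra). nra. }
set (c := cc a) in *.
set (p := - ((a+1)/a)).
assert (Hp : 0 < p) by (unfold p; lra).
assert (Hl2 : 0 < ln ((1+c)/2)) by (apply ln_pos'; lra).
set (e2 := exp (ln ((1+c)/2) / p) - 1).
assert (He2 : 0 < e2).
{ unfold e2. assert (1 < exp (ln ((1+c)/2) / p)) by (apply exp_gt1'; apply Rdiv_lt_0_compat; lra). lra. }
set (M := 16 * c / ((a+1) * (c-1))).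
assert (HM : 0 < M) by (apply Rdiv_lt_0_compat; [lra| apply Rmult_lt_0_compat; lra]).
set (e3 := exp (ln M / a)).
assert (He3 : 0 < e3) by apply exp_pos.
exists (Rmin e1 (Rmin e2 e3)).
split. { split. apply Rmin_glb_lt; [lra| apply Rmin_glb_lt; lra]. apply Rmin_l. }
intros x [Hx0 Hx1].
assert (Hxe1 : x <= e1) by (eapply Rle_trans; [exact Hx1| apply Rmin_l]).
assert (Hxe2 : x <= e2) by (eapply Rle_trans; [exact Hx1| eapply Rle_trans; [apply Rmin_r| apply Rmin_l]]).
assert (Hxe3 : x <= e3) by (eapply Rle_trans; [exact Hx1| eapply Rle_trans; [apply Rmin_r| apply Rmin_r]]).
assert (Hlx : ln x < 0) by (apply ln_neg'; lra).
assert (HA0 := AA_pos a x). assert (Hu0 := UU_pos a x).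
assert (Ht1 : x * UU a x <= 1).
{ unfold UU. rewrite <- exp_a1 by lra. left. apply exp_lt1'. nra. }
assert (HuM : M <= UU a x).
{ unfold UU. rewrite <- (exp_ln M) by lra. apply exp_le'.
  assert (ln x <= ln M / a) by (unfold e3 in Hxe3; rewrite <- (ln_exp (ln M / a)); apply ln_le'; lra).
  apply Rle_trans with (a * (ln M / a)). right; field; lra. apply Rmult_le_compat_neg_l; lra. }
assert (HAt : AA a x * (1 + x * UU a x) <= (1 + c)/2).
{ unfold AA. set (t := x * UU a x) in *.
  assert (Ht0 : 0 < t) by (unfold t; nra).
  assert (HL : 0 <= ln (1 + t)) by (rewrite <- ln_1; apply ln_le'; lra).
  assert (HB1 : exp (1 / a * ln (1 + t)) * (1 + t) <= 1).
  { rewrite <- (exp_ln (1+t)) at 2 by nra. rewrite <- exp_plus. apply Rle_trans with (exp 0); [apply exp_le' | rewrite exp_0; lra].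
    replace (1 / a * ln (1 + t) + ln (1 + t)) with ((a+1)/a * ln (1+t)) by (field; lra). nra. }
  assert (HB2 : exp (- ((a + 1) / a) * ln (1 + x)) <= (1+c)/2).
  { fold p. rewrite <- (exp_ln ((1+c)/2)) by lra. apply exp_le'.
    assert (ln (1+x) <= ln ((1+c)/2) / p).
    { rewrite <- (ln_exp (ln ((1+c)/2) / p)). apply ln_le'; unfold e2 in Hxe2; lra. }
    apply Rle_trans with (p * (ln ((1+c)/2) / p)). apply Rmult_le_compat_l; lra. right; field; lra. }
  assert (0 < exp (1 / a * ln (1 + t))) by apply exp_pos.
  assert (0 < exp (- ((a + 1) / a) * ln (1 + x))) by apply exp_pos.
  replace (exp (1 / a * ln (1 + t)) * exp (- ((a + 1) / a) * ln (1 + x)) * (1 + t))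
    with ((exp (1 / a * ln (1 + t)) * (1 + t)) * exp (- ((a + 1) / a) * ln (1 + x))) by ring.
  apply Rle_trans with (1 * exp (- ((a + 1) / a) * ln (1 + x))); [|lra].
  apply Rmult_le_compat_r; lra. }
set (u := UU a x) in *. set (A := AA a x) in *.
set (S := (a+1)*A*(u/(1+x*u) - 1/(1+x)) + c*(1/(1+x)^2 - (a+1)*u/(1+x*u)^2)).
assert (E : Dpsi a x = (- S) / (- a)).
{ unfold Dpsi, Kc, S. fold u A c. field. repeat split; try lra; nra. }
rewrite E. apply Rdiv_lt_0_compat; [|lra].
set (N := A * (1 + x*u) - c).
set (s := (1 + x*u)^2).
assert (Hxu : 0 < x * u) by nra.
assert (Hs1 : 1 <= s) by (unfold s; replace ((1+x*u)^2) with ((1+x*u)*(1+x*u)) by ring; nra).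
assert (Hs4 : s <= 4) by (unfold s; replace ((1+x*u)^2) with ((1+x*u)*(1+x*u)) by ring; nra).
assert (E2 : S = (a+1) * u * (N * (1/s)) - (a+1) * (A / (1+x)) + c * (1/(1+x)^2)).
{ unfold S, N, s. field. repeat split; try lra; nra. }
assert (Hi4 : 1/4 <= 1/s).
{ apply Rmult_le_reg_r with (4 * s). lra. field_simplify; lra. }
assert (HN : N <= (1 - c)/2) by (unfold N; lra).
assert (HNs : N * (1/s) <= (1-c)/8).
{ apply Rle_trans with (N * (1/4)). apply Rmult_le_compat_neg_l; lra. lra. }
assert (Hw : 1/(1+x)^2 <= 1).
{ apply Rmult_le_reg_r with ((1+x)^2). nra. field_simplify; nra. }
assert (H0A : 0 <= A / (1+x)) by (apply Rdiv_le_0_compat; lra).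
assert (Hk : (a+1) * u * (N * (1/s)) <= (a+1) * u * ((1-c)/8)).
{ apply Rmult_le_compat_l; nra. }
assert (Hk2 : (a+1) * u * ((1-c)/8) <= (a+1) * M * ((1-c)/8)).
{ assert (0 <= (a+1) * ((c-1)/8)) by nra. nra. }
assert (HMv : (a+1) * M * ((1-c)/8) = - 2 * c) by (unfold M; field; lra).
nra.
Qed.
Definition PP a x := rpow x (a+1).
Lemma PP_nonneg a x : 0 <= PP a x.
Proof. unfold PP, rpow. destruct (Rlt_dec 0 x). left; apply exp_pos. lra. Qed.
Lemma PP_0 a : PP a 0 = 0.
Proof. unfold PP, rpow. destruct (Rlt_dec 0 0); [lra|reflexivity]. Qed.

Lemma PP_cont a : -1 < a -> continuity_pt (PP a) 0.
Proof.
intros Ha eps Heps. simpl. unfold Rdist.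
exists (exp (ln eps / (a+1))). split. apply exp_pos.
intros x [_ Hx]. rewrite PP_0, Rminus_0_r. rewrite Rminus_0_r in Hx.
unfold PP, rpow. destruct (Rlt_dec 0 x) as [Hx0|Hx0].
- rewrite Rabs_pos_eq by (left; apply exp_pos). unfold Rpower.
  rewrite Rabs_pos_eq in Hx by lra.
  rewrite <- (exp_ln eps) by lra. apply exp_increasing.
  assert (ln x < ln eps / (a+1)) by (rewrite <- (ln_exp (ln eps / (a+1))); apply ln_increasing; lra).
  apply Rlt_le_trans with ((a+1) * (ln eps / (a+1))). apply Rmult_lt_compat_l; lra. right; field; lra.
- rewrite Rabs_R0. lra.
Qed.

Lemma exd_cont (f : R -> R) x : ex_derive f x -> continuous f x.
Proof. apply (@ex_derive_continuous R_AbsRing R_NormedModule). Qed.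

Definition GG a x := exp (1/a * ln (1 + PP a x)) * exp (- ((a+1)/a) * ln (1+x))
   + Kc a * (1/(1 + PP a x) - 1/(1+x)).

Lemma GG_cont a : -1 < a -> continuous (GG a) 0.
Proof.
intros Ha. unfold GG.
apply (continuous_plus (fun x => exp (1/a * ln (1 + PP a x)) * exp (- ((a+1)/a) * ln (1+x)))
   (fun x => Kc a * (1/(1 + PP a x) - 1/(1+x)))).
- apply (continuous_mult (fun x => exp (1/a * ln (1 + PP a x))) (fun x => exp (- ((a+1)/a) * ln (1+x)))).
  + apply (continuous_comp (PP a) (fun t => exp (1/a * ln (1 + t)))).
    * apply continuity_pt_filterlim. now apply PP_cont.
    * rewrite PP_0. apply exd_cont. auto_derive. lra.
  + apply exd_cont. auto_derive. lra.
- apply (continuous_mult (fun _ => Kc a) (fun x => 1/(1 + PP a x) - 1/(1+x))).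
  + apply continuous_const.
  + apply (continuous_minus (fun x => 1/(1 + PP a x)) (fun x => 1/(1+x))).
    * apply (continuous_comp (PP a) (fun t => 1/(1 + t))).
      -- apply continuity_pt_filterlim. now apply PP_cont.
      -- rewrite PP_0. apply exd_cont. auto_derive. lra.
    * apply exd_cont. auto_derive. lra.
Qed.

Lemma psi0_cont0 a : -1 < a -> continuity_pt (psi0 a) 0.
Proof.
intros Ha. apply continuity_pt_locally_ext with (GG a) 1. lra.
- intros y Hy. unfold Rdist in Hy. rewrite Rminus_0_r in Hy. apply Rabs_lt_between in Hy.
  unfold GG, psi0. fold (PP a y). assert (H := PP_nonneg a y).
  rewrite (rpow_pos_eq (1 + PP a y)) by lra.
  rewrite (rpow_pos_eq (1 + y)) by lra.
  unfold Kc, cc. rewrite <- Ropp_mult_distr_l, exp_Ropp. unfold Rdiv. ring.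
- apply continuity_pt_filterlim. now apply GG_cont.
Qed.
Lemma loc_dec f x l d : derivable_pt_lim f x l -> 0 < l -> 0 < d ->
  exists y, x - d < y < x /\ f y < f x.
Proof.
intros H Hl Hd. destruct (H (l/2)) as [del Hdel]; [lra|].
assert (Hdp := cond_pos del).
assert (Hm : 0 < Rmin del d) by (apply Rmin_glb_lt; lra).
assert (Hm1 := Rmin_l del d). assert (Hm2 := Rmin_r del d).
set (h := - (Rmin del d / 2)) in *.
assert (Hh0 : h <> 0) by (unfold h; lra).
assert (Hh1 : Rabs h < del) by (unfold h; rewrite Rabs_left by lra; lra).
specialize (Hdel h Hh0 Hh1).
apply Rabs_lt_between in Hdel.
set (q := (f (x + h) - f x) / h) in *.
assert (Eq : f (x + h) - f x = q * h) by (unfold q; field; auto).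
exists (x + h). split. unfold h; lra.
assert (q * h < 0) by (assert (h < 0) by (unfold h; lra); nra). lra.
Qed.

Lemma incr f p q d : p < q -> (forall c, p <= c <= q -> continuity_pt f c) ->
  (forall x, p < x <= q -> derivable_pt_lim f x (d x) /\ 0 < d x) -> f p < f q.
Proof.
intros Hpq Hc Hd.
destruct (continuity_ab_min f p q ltac:(lra) Hc) as [m [Hm1 Hm2]].
assert (Hmp : m = p).
{ destruct (Req_dec m p) as [E|E]; auto. exfalso.
  destruct (Hd m ltac:(lra)) as [D1 D2].
  destruct (loc_dec f m (d m) (m - p) D1 D2 ltac:(lra)) as [y [Hy1 Hy2]].
  specialize (Hm1 y ltac:(lra)). lra. }
subst m.
destruct (Hd q ltac:(lra)) as [D1 D2].
destruct (loc_dec f q (d q) (q - p) D1 D2 ltac:(lra)) as [y [Hy1 Hy2]].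
specialize (Hm1 y ltac:(lra)). lra.
Qed.

Theorem corollary2p6 (a eta1 : R) (ha : -1 < a) (ha0 : a <> 0)
  (h1 : eta1_root a eta1)
  (huniq : forall e, eta1_root a e -> e = eta1) :
  exists etamax : R,
    0 < etamax < eta1 /\
    (forall e, 0 <= e <= eta1 -> psi0 a e <= psi0 a etamax) /\
    derivable_pt_lim (fun e => psi0 a e) etamax 0.
Proof.
assert (Hd1 := D_eta1 a eta1 ha ha0 h1).
destruct h1 as [[He0 He1] Hr].
assert (Hnear : exists e0, 0 < e0 <= eta1 /\ forall x, 0 < x <= e0 -> 0 < Dpsi a x).
{ destruct (Rlt_or_le 0 a) as [Hp|Hn].
  - apply near0_pos; lra.
  - apply near0_neg; lra. }
destruct Hnear as [e0 [He0' Hpos]].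
assert (Hcont : forall c, 0 <= c -> continuity_pt (psi0 a) c).
{ intros c Hc. destruct (Req_dec c 0) as [E|E].
  - subst c. now apply psi0_cont0.
  - apply derivable_continuous_pt. exists (Dpsi a c). apply der_psi0; lra. }
assert (Hinc : psi0 a 0 < psi0 a e0).
{ apply (incr (psi0 a) 0 e0 (Dpsi a)). lra.
  intros c Hc. apply Hcont; lra.
  intros x Hx. split. apply der_psi0; lra. apply Hpos; lra. }
destruct (continuity_ab_maj (psi0 a) 0 eta1 ltac:(lra) ltac:(intros c Hc; apply Hcont; lra)) as [M [HM1 HM2]].
assert (HM0 : M <> 0).
{ intros E. subst M. specialize (HM1 e0 ltac:(lra)). lra. }
assert (HMe : M <> eta1).
{ intros E. subst M.
  assert (Hd : derivable_pt_lim (fun x => - psi0 a x) eta1 (- Dpsi a eta1)).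
  { apply (derivable_pt_lim_opp (psi0 a)). apply der_psi0; lra. }
  destruct (loc_dec _ _ _ eta1 Hd ltac:(lra) ltac:(lra)) as [y [Hy1 Hy2]].
  specialize (HM1 y ltac:(lra)). lra. }
exists M. split. lra. split. exact HM1.
assert (HD := der_psi0 a M ha0 ltac:(lra)).
assert (HZ : Dpsi a M = 0).
{ set (pr := exist (fun l => derivable_pt_lim (psi0 a) M l) (Dpsi a M) HD : derivable_pt (psi0 a) M).
  rewrite <- (derive_pt_eq_0 (psi0 a) M (Dpsi a M) pr HD).
  apply (deriv_maximum (psi0 a) 0 eta1 M pr); try lra.
  intros x Hx1 Hx2. apply HM1; lra. }
rewrite HZ in HD. exact HD.
Qed.
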